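(* Let $I\subset\mathbb{N}^{d}$ be a finite nonempty set of multi-indices which is closed under the componentwise minimum, i.e. $i,j\in I$ implies $i\wedge j\in I$ where $(i\wedge j)_k=\min\{i_k,j_k\}$. Then the general coefficient problem for $I$ has exactly one solution, and it is given by hierarchical coefficients $w_i=1$ for all $i\in I{\downarrow}$. That is: there exists a unique family of real coefficients $(c_i)_{i\in I}$ with $\sum_{j\in I,\,j\ge i}c_j=1$ for every $i\in I{\downarrow}$, and this family is the unique maximiser of the general coefficient problem for $I$.
   Context: For multi-indices $i,j\in\mathbb{N}^d$, $i\le j$ means $i_k\le j_k$ for all $k=1,\dots,d$, and $\|i\|_1=\sum_k i_k$. For a finite $I\subset\mathbb{N}^d$, $I{\downarrow}:=\{i\in\mathbb{N}^d:\exists j\in I\text{ with } i\le j\}$. Given real coefficients $(c_i)_{i\in I}$, their hierarchical coefficients are $w_i:=\sum_{j\in I,\ j\ge i}c_j$ for $i\in I{\downarrow}$. The general coefficient problem (GCP) for $I$ is: among all families $(c_i)_{i\in I}$ of reals whose hierarchical coefficients satisfy $w_i\in\{0,1\}$ for every $i\in I{\downarrow}$, maximise $Q'(w):=\sum_{i\in I{\downarrow}}4^{-\|i\|_1}w_i$. (Equivalently, extending $c_i:=0$ for $i\in I{\downarrow}\setminus I$, $w=Mc$ with $M$ the $0/1$ matrix $M_{ij}=[j\ge i]$ on $I{\downarrow}$, and the GCP is a maximisation over binary $w$ on $I{\downarrow}$ subject to $(M^{-1}w)_i=0$ for $i\in I{\downarrow}\setminus I$.) A solution of the GCP is a maximising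 family $(c_i)_{i\in I}$. *)

(* Defs.v *)
From HB Require Import structures.
From mathcomp Require Import all_boot all_order all_algebra.
Set Implicit Arguments. Unset Strict Implicit. Unset Printing Implicit Defensive.
Import Order.TTheory GRing.Theory Num.Theory.

Definition mi (d : nat) := {ffun 'I_d -> nat}.

Definition mle d (i j : mi d) : bool := [forall k, i k <= j k].

Definition mmeet d (i j : mi d) : mi d := [ffun k => minn (i k) (j k)].

Definition norm1 d (i : mi d) : nat := \sum_(k < d) i k.

Definition in_down d (I : seq (mi d)) (i : mi d) : bool := has (mle i) I.

Definition box d (j : mi d) : seq (mi d) :=
  [seq g <- [seq [ffun k => nat_of_ord (fun_of_fin f k)] | f : {ffun 'I_d -> 'I_(\max_(k < d) j k).+1} <- enum {ffun 'I_d -> 'I_(\max_(k < d) j k).+1}]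
     | mle g j].

Definition downI d (I : seq (mi d)) : seq (mi d) := undup (flatten (map (@box d) I)).

Lemma downI_uniq d (I : seq (mi d)) : uniq (downI I).
Proof. exact: undup_uniq. Qed.

Lemma mem_downI d (I : seq (mi d)) i : (i \in downI I) = in_down I i.
Proof.
rewrite /downI mem_undup /in_down; apply/flattenP/hasP.
  case=> s /mapP [j jI ->]; rewrite /box mem_filter => /andP [lij _].
  by exists j.
move=> [j jI lij]; exists (box j); first by apply/mapP; exists j.
rewrite /box mem_filter lij /=; apply/mapP.
have lt k : i k < (\max_(k0 < d) j k0).+1.
  rewrite ltnS; apply: leq_trans (forallP lij k) _.
  by apply: (leq_bigmax_cond (F := fun k0 : 'I_d => j k0)).
exists [ffun k => Ordinal (lt k)]; first by rewrite mem_enum.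
by apply/ffunP => k; rewrite !ffunE.
Qed.

Local Open Scope ring_scope.

Definition hier (R : realFieldType) d (I : seq (mi d)) (c : mi d -> R) (i : mi d) : R :=
  \sum_(j <- I | mle i j) c j.

Definition Qobj (R : realFieldType) d (I : seq (mi d)) (w : mi d -> R) : R :=
  \sum_(i <- downI I) (4%:R ^-1) ^+ norm1 i * w i.

Definition gcp_feasible (R : realFieldType) d (I : seq (mi d)) (c : mi d -> R) : Prop :=
  forall i, in_down I i -> (hier I c i == 0) || (hier I c i == 1).

(* Main.v *)
Require Import Defs.
From HB Require Import structures.
From mathcomp Require Import all_boot all_order all_algebra.
Import Order.TTheory GRing.Theory Num.Theory.
Local Open Scope ring_scope.
Set Implicit Arguments. Unset Strict Implicit.

Section Aux.
Variable d : nat.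
Implicit Types i j k : mi d.

Lemma mle_refl i : mle i i.
Proof. by apply/forallP => k. Qed.

Lemma mle_trans i j k : mle i j -> mle j k -> mle i k.
Proof.
move=> /forallP H1 /forallP H2; apply/forallP => x.
exact: (leq_trans (H1 x) (H2 x)).
Qed.

Lemma mle_anti i j : mle i j -> mle j i -> i = j.
Proof.
move=> /forallP H1 /forallP H2; apply/ffunP => x.
by apply/eqP; rewrite eqn_leq H1 H2.
Qed.

Lemma mle_meetl i j : mle (mmeet i j) i.
Proof. by apply/forallP => x; rewrite ffunE geq_minl. Qed.

Lemma mle_meetr i j : mle (mmeet i j) j.
Proof. by apply/forallP => x; rewrite ffunE geq_minr. Qed.

Lemma mle_meet k i j : mle k i -> mle k j -> mle k (mmeet i j).
Proof.
move=> /forallP H1 /forallP H2; apply/forallP => x.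
by rewrite ffunE leq_min H1 H2.
Qed.
End Aux.

Lemma count_lt_sub (T : eqType) (P Q : pred T) (s : seq T) x :
  (forall y, P y -> Q y) -> x \in s -> Q x -> ~~ P x -> (count P s < count Q s)%N.
Proof.
move=> PQ; elim: s => [//|y s IH]; rewrite in_cons /= => /orP [/eqP <-|xs] Qx nPx.
  rewrite Qx (negbTE nPx) add0n add1n ltnS; apply: sub_count => z; exact: PQ.
have := IH xs Qx nPx; case Py: (P y); first by rewrite (PQ _ Py) add1n ltnS.
by move=> H; apply: leq_trans H _; rewrite leq_addl.
Qed.

Section Main.
Variable R : realFieldType.
Variable d : nat.
Variable I : seq (mi d).

Definition sabove (i : mi d) : pred (mi d) := fun j => mle i j && (j != i).

Definition hgt (i : mi d) : nat := count (sabove i) I.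

Fixpoint cf (n : nat) (i : mi d) : R :=
  match n with
  | 0%N => 0
  | n'.+1 => 1 - \sum_(j <- I | sabove i j) cf n' j
  end.

Lemma hgt_lt i j : j \in I -> sabove i j -> (hgt j < hgt i)%N.
Proof.
move=> jI /andP [lij nji]; apply: (@count_lt_sub _ _ _ _ j) => //.
- move=> k /andP [ljk nkj]; rewrite /sabove (mle_trans lij ljk) /=.
  apply/eqP => eki; move: nji; rewrite -eki in lij *.
  by rewrite (mle_anti ljk lij) eqxx.
- by rewrite /sabove lij.
- by rewrite /sabove eqxx andbF.
Qed.

Lemma cf_stable n : forall m i, (hgt i < n)%N -> (hgt i < m)%N -> cf n i = cf m i.
Proof.
elim: n => [//|n IH] [//|m] i Hn Hm /=; congr (1 - _).
rewrite big_seq_cond [RHS]big_seq_cond; apply: eq_bigr => j /andP [jI sj].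
have := hgt_lt jI sj => hj.
by apply: IH; [apply: leq_trans hj Hn | apply: leq_trans hj Hm].
Qed.

Definition c0 (i : mi d) : R := cf (size I).+1 i.

Lemma hgt_le i : (hgt i <= size I)%N.
Proof. exact: count_size. Qed.

Lemma c0_eq i : c0 i = 1 - \sum_(j <- I | sabove i j) c0 j.
Proof.
rewrite /c0 /=; congr (1 - _).
rewrite big_seq_cond [RHS]big_seq_cond; apply: eq_bigr => j /andP [jI sj].
have := hgt_lt jI sj => hj; have := hgt_le i => hi.
rewrite (@cf_stable (size I) (size I).+1 j) //; first by apply: leq_trans hj hi.
by apply: leq_trans hj _; apply: leq_trans hi _.
Qed.

Hypothesis uI : uniq I.

Lemma hier_split (c : mi d -> R) i : i \in I ->
  hier I c i = c i + \sum_(j <- I | sabove i j) c j.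
Proof.
move=> iI; rewrite /hier -big_filter (bigD1_seq i).
- by rewrite big_filter_cond.
- by rewrite mem_filter mle_refl.
- exact: filter_uniq.
Qed.

Lemma uniq_sol (c : mi d -> R) :
  (forall i, i \in I -> hier I c i = 1) -> {in I, c =1 c0}.
Proof.
move=> Hc i iI.
move: {2}(hgt i) (leqnn (hgt i)) => n; elim: n i iI => [|n IH] i iI Hn.
  have := Hc i iI; rewrite hier_split // c0_eq.
  have -> : \sum_(j <- I | sabove i j) c j = 0.
    rewrite big_seq_cond big1 // => j /andP [jI sj].
    by have := hgt_lt jI sj; rewrite leqn0 in Hn; rewrite (eqP Hn).
  have -> : \sum_(j <- I | sabove i j) c0 j = 0.
    rewrite big_seq_cond big1 // => j /andP [jI sj].
    by have := hgt_lt jI sj; rewrite leqn0 in Hn; rewrite (eqP Hn).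
  by rewrite addr0 subr0.
have := Hc i iI; rewrite hier_split // c0_eq.
have -> : \sum_(j <- I | sabove i j) c j = \sum_(j <- I | sabove i j) c0 j.
  rewrite big_seq_cond [RHS]big_seq_cond; apply: eq_bigr => j /andP [jI sj].
  apply: IH => //; have := hgt_lt jI sj => hj; apply: leq_trans hj Hn.
by move=> <-; rewrite addrK.
Qed.

Hypothesis mI : forall i j, i \in I -> j \in I -> mmeet i j \in I.

Lemma meet_exists i s x0 : x0 \in I -> mle i x0 -> {subset s <= I} -> all (mle i) s ->
  exists m, [/\ m \in I, mle i m, mle m x0 & all (mle m) s].
Proof.
move=> x0I lx0; elim: s => [|y s IH] sI /=.
  by move=> _; exists x0; rewrite mle_refl.
move=> /andP [liy ls].
have [m [mI' lim lmx lms]] := IH (fun z zs => sI z (mem_behead (s := y :: s) zs)) ls.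
have yI : y \in I by apply: sI; rewrite mem_head.
exists (mmeet y m); split.
- exact: mI.
- exact: mle_meet.
- exact: mle_trans (mle_meetr _ _) lmx.
- rewrite mle_meetl /=; apply/allP => z zs.
  exact: mle_trans (mle_meetr _ _) (allP lms z zs).
Qed.

Lemma c0_hier i : in_down I i -> hier I c0 i = 1.
Proof.
move=> /hasP [x0 x0I lix0].
have [m [mI' lim lmx lms]] := meet_exists (s := [seq j <- I | mle i j]) x0I lix0
   (fun z => ltac:(by rewrite mem_filter => /andP [])) (filter_all _ _).
have -> : hier I c0 i = hier I c0 m.
  rewrite /hier big_seq_cond [RHS]big_seq_cond; apply: eq_bigl => j.
  case jI: (j \in I) => //=; apply/idP/idP => H.
    by apply: (allP lms); rewrite mem_filter H.
  exact: mle_trans lim H.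
rewrite hier_split // c0_eq subrK //.
Qed.

End Main.

Theorem mainTheorem2 (R : realFieldType) (d : nat) (I : seq (mi d)) :
  I != [::] -> uniq I ->
  (forall i j, i \in I -> j \in I -> mmeet i j \in I) ->
  exists c : mi d -> R,
    [/\ (* hierarchical coefficients are all 1 on I↓ *)
        forall i, in_down I i -> hier I c i = 1,
        (* uniqueness of such a family *)
        forall c' : mi d -> R, (forall i, in_down I i -> hier I c' i = 1) ->
          {in I, c' =1 c},
        (* c is admissible and maximises Q' *)
        gcp_feasible I c,
        forall c' : mi d -> R, gcp_feasible I c' -> Qobj I (hier I c') <= Qobj I (hier I c)
      & (* c is the unique maximiser *)
        forall c' : mi d -> R, gcp_feasible I c' ->
          Qobj I (hier I c') = Qobj I (hier I c) -> {in I, c' =1 c}].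
Proof.
move=> _ uI mI.
have H1 := @c0_hier R d I uI mI.
have Hin i : i \in I -> in_down I i by move=> iI; apply/hasP; exists i => //; exact: mle_refl.
have H2 : forall c' : mi d -> R, (forall i, in_down I i -> hier I c' i = 1) ->
          {in I, c' =1 c0 R I}.
  by move=> c' Hc'; apply: uniq_sol => // i iI; apply: Hc'; apply: Hin.
have Qc : Qobj I (hier I (c0 R I)) = \sum_(i <- downI I) (4%:R ^-1 : R) ^+ norm1 i.
  rewrite /Qobj big_seq [RHS]big_seq; apply: eq_bigr => i.
  by rewrite mem_downI => /H1 ->; rewrite mulr1.
have wpos (i : mi d) : 0 < (4%:R ^-1 : R) ^+ norm1 i.
  by apply: exprn_gt0; rewrite invr_gt0 ltr0n.
have le1 c' : gcp_feasible I c' -> forall i, i \in downI I -> hier I c' i <= 1.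
  move=> Hf i; rewrite mem_downI => /Hf /orP [] /eqP ->; by rewrite ?ler01 ?lexx.
exists (c0 R I); split => //.
- by move=> i /H1 ->; rewrite eqxx orbT.
- move=> c' Hf; rewrite Qc /Qobj big_seq [X in _ <= X]big_seq.
  apply: ler_sum => i iD; rewrite -[X in _ <= X]mulr1.
  by rewrite ler_wpM2l ?(ltW (wpos i)) ?le1.
move=> c' Hf Heq; apply: H2 => i iD.
have : Qobj I (hier I (c0 R I)) - Qobj I (hier I c') == 0 by rewrite Heq subrr.
rewrite Qc /Qobj -sumrB big_seq psumr_eq0.
  move=> /allP /(_ i); rewrite mem_downI iD => /(_ isT) /=.
  rewrite -{1}[_ ^+ _]mulr1 -mulrBr mulf_eq0 (negbTE (lt0r_neq0 (wpos i))) /=.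
  by rewrite subr_eq0 => /eqP <-.
move=> j jD; rewrite -{1}[_ ^+ _]mulr1 -mulrBr mulr_ge0 ?(ltW (wpos j)) //.
by rewrite subr_ge0 le1.
Qed.
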